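(* Let $\phi_n(x)=((n+1)x^2-3x-n)U_n(x)+(x+1)U_{n-1}(x)+x+1$. Define, for $k\ge1$, \[ Q_{2k}(x)=((2k+1)x^2-3x-2k)(U_k(x)-U_{k-1}(x))+(x+1)(U_{k-1}(x)-U_{k-2}(x)), \] and, for $k\ge0$, \[ Q_{2k+1}(x)=((2k+2)x^2-3x-2k-1)(U_{k+1}(x)-U_{k-1}(x))+(x+1)(U_k(x)-U_{k-2}(x)). \] Then $\phi_n(x)=U^{\mathrm e}_n(x)\,Q_n(x)$ for all $n\ge1$.
   Context: $U_n$ is the Chebyshev polynomial of the second kind, $U_n(\cos\theta)=\sin((n+1)\theta)/\sin\theta$, extended to negative indices via the recurrence $U_{k+1}=2xU_k-U_{k-1}$, i.e. $U_{-1}=0$, $U_{-2}=-1$. $U^{\mathrm e}_n$ is defined by $U^{\mathrm e}_n(\cos\theta)=\frac{\sin((n+1)\theta/2)}{\sin(\theta/2)}$ for $n$ even and $U^{\mathrm e}_n(\cos\theta)=\frac{\sin((n+1)\theta/2)}{\sin\theta}$ for $n$ odd (a polynomial in $\cos\theta$). Note $\phi_n(x)=\frac14\Phi_n(2x)$ where $\Phi_n(x)=((n+1)x^2-6x-4n)U_n(x/2)+2(x+2)U_{n-1}(x/2)+2(x+2)$. *)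

(* Defs.v *)
From HB Require Import structures.
From mathcomp Require Import all_boot all_order all_algebra.
From mathcomp Require Import reals trigo.
Set Implicit Arguments. Unset Strict Implicit. Unset Printing Implicit Defensive.
Import Order.TTheory GRing.Theory Num.Theory.
Local Open Scope ring_scope.

Fixpoint chebU_nat {R : comNzRingType} (n : nat) : {poly R} :=
  match n with
  | 0 => 1
  | 1 => 2%:P * 'X
  | (m.+1 as m1).+1 => 2%:P * 'X * chebU_nat m1 - chebU_nat m
  end.

(* Extension to all integer indices via the same recurrence:
   U_{-1} = 0 and U_{-(m+2)} = - U_m  (so U_{-2} = -1). *)
Definition chebU {R : comNzRingType} (z : int) : {poly R} :=
  match z with
  | Posz n => chebU_nat n
  | Negz 0 => 0
  | Negz m.+1 => - chebU_nat m
  end.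

Definition phi {R : comNzRingType} (n : nat) : {poly R} :=
  ((n.+1)%:R%:P * 'X^2 - 3%:P * 'X - n%:R%:P) * chebU (n%:Z)
  + ('X + 1) * chebU (n%:Z - 1) + 'X + 1.

Definition Q_even {R : comNzRingType} (k : nat) : {poly R} :=
  ((2 * k + 1)%:R%:P * 'X^2 - 3%:P * 'X - (2 * k)%:R%:P)
    * (chebU (k%:Z) - chebU (k%:Z - 1))
  + ('X + 1) * (chebU (k%:Z - 1) - chebU (k%:Z - 2)).

Definition Q_odd {R : comNzRingType} (k : nat) : {poly R} :=
  ((2 * k + 2)%:R%:P * 'X^2 - 3%:P * 'X - (2 * k + 1)%:R%:P)
    * (chebU (k%:Z + 1) - chebU (k%:Z - 1))
  + ('X + 1) * (chebU (k%:Z) - chebU (k%:Z - 2)).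

Definition Q {R : comNzRingType} (n : nat) : {poly R} :=
  if odd n then Q_odd n./2 else Q_even n./2.

Definition Ue_trig {R : realType} (n : nat) (theta : R) : R :=
  if odd n then sin (n.+1%:R * theta / 2) / sin theta
  else sin (n.+1%:R * theta / 2) / sin (theta / 2).

(* p is the polynomial U^e_n: p(cos theta) equals the defining expression
   whenever the expression is defined (sin theta <> 0). *)
Definition is_Ue {R : realType} (n : nat) (p : {poly R}) : Prop :=
  forall theta : R, sin theta != 0 -> p.[cos theta] = Ue_trig n theta.

(* Main.v *)
Require Import Defs.
From HB Require Import structures.
From mathcomp Require Import all_boot all_order all_algebra.
From mathcomp Require Import reals trigo.
From mathcomp Require Import ring lra.
Import Order.TTheory GRing.Theory Num.Theory.
Local Open Scope ring_scope.

Section Alg.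
Variable R : comNzRingType.
Definition F (j : nat) : {poly R} := if j is j'.+1 then chebU_nat j' else 0.

Lemma F_rec j : F j.+2 = 2%:P * 'X * F j.+1 - F j.
Proof. case: j => [|j] /=; first by rewrite mulr1 subr0. by []. Qed.

Lemma F0 : F 0 = 0. Proof. by []. Qed.
Lemma F1 : F 1 = 1. Proof. by []. Qed.
Lemma F2 : F 2 = 2%:P * 'X. Proof. by []. Qed.

Lemma F_add m n : F (m + n).+1 = F m.+1 * F n.+1 - F m * F n.
Proof.
suff H : forall n, F (m + n).+1 = F m.+1 * F n.+1 - F m * F n /\
                   F (m + n.+1).+1 = F m.+1 * F n.+2 - F m * F n.+1 by case: (H n).
move=> {n}; elim=> [|n [IH1 IH2]].
  rewrite addn0 addn1 F0 F1 F2 F_rec; split; ring.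
split=> //.
rewrite !addnS in IH2 *.
rewrite F_rec IH2 IH1 (F_rec n.+1) (F_rec n).
ring.
Qed.

Lemma F_cassini j : F j.+1 ^+ 2 - F j * F j.+2 = 1.
Proof.
elim: j => [|j IH]; first by rewrite F2 F1 F0; ring.
by rewrite -IH (F_rec j.+1) (F_rec j); ring.
Qed.

Lemma cU_pos k : chebU (Posz k) = F k.+1 :> {poly R}. Proof. by []. Qed.
Lemma cU_m1 k : chebU (k%:Z - 1) = F k :> {poly R}.
Proof. case: k => [|k] //=. by rewrite subn1. Qed.
Lemma cU_m2 k : chebU (k.+1%:Z - 2) = F k :> {poly R}.
Proof. case: k => [|k] //=. by rewrite subn2. Qed.
Lemma cU_p1 k : chebU (k%:Z + 1) = F k.+2 :> {poly R}.
Proof. by rewrite -PoszD addn1. Qed.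

Lemma phi_even j : phi (j.+1).*2 = (F j.+2 + F j.+1) * Q (j.+1).*2 :> {poly R}.
Proof.
rewrite /Q odd_double doubleK /phi /Q_even.
rewrite cU_pos cU_m1 cU_pos cU_m1 cU_m2 mul2n addn1.
rewrite -addnn F_add.
have -> : (j.+1 + j.+1)%N = (j + j.+1).+1 by rewrite addSn.
rewrite F_add.
have C := F_cassini j.
apply/eqP; rewrite -subr_eq0; apply/eqP.
transitivity (('X + 1) * (1 - (F j.+1 ^+ 2 - F j * F j.+2))); first ring.
by rewrite C subrr mulr0.
Qed.

Lemma phi_odd j : phi (j.+1).*2.+1 = F j.+2 * Q (j.+1).*2.+1 :> {poly R}.
Proof.
have -> : Q (j.+1).*2.+1 = Q_odd j.+1 :> {poly R}.
  rewrite /Q /= odd_double /=.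
  by rewrite uphalf_double.
rewrite /phi /Q_odd.
rewrite cU_pos cU_m1 cU_pos cU_m1 cU_m2 cU_p1 mul2n addn1 addn2.
rewrite -addnn -[(j.+1 + j.+1).+2]/((j.+2 + j.+1).+1) !F_add.
have C := F_cassini j.
apply/eqP; rewrite -subr_eq0; apply/eqP.
transitivity (('X + 1) * (1 - (F j.+1 ^+ 2 - F j * F j.+2))); first ring.
by rewrite C subrr mulr0.
Qed.

Lemma phi_one : phi 1 = F 1 * Q 1 :> {poly R}.
Proof.
rewrite /phi /Q /Q_odd /= muln0 !add0n.
rewrite polyC1; ring.
Qed.

End Alg.
Arguments F {R} j.

Section Trig.
Variable R : realType.

Lemma F_trig j (t : R) : (F j).[cos t] * sin t = sin (j%:R * t).
Proof.
suff H : (F j).[cos t] * sin t = sin (j%:R * t) /\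
         (F j.+1).[cos t] * sin t = sin (j.+1%:R * t) by case: H.
elim: j => [|j [IH1 IH2]].
  by rewrite F0 F1 horner0 mul0r mul0r sin0 hornerC mul1r mul1r.
split=> //.
rewrite F_rec !hornerE mulrBl -!mulrA IH2 IH1.
have -> : j.+2%:R * t = j.+1%:R * t + t by rewrite -addn1 natrD; ring.
have -> : j%:R * t = j.+1%:R * t - t by rewrite -[j.+1]addn1 natrD; ring.
rewrite sinB sinD; ring.
Qed.

Lemma Ue_even k : is_Ue (k.*2) (F k.+1 + F k : {poly R}).
Proof.
move=> t hs; rewrite /Ue_trig odd_double.
set a := (k.*2.+1%:R * t / 2); set b := t / 2.
have et : sin t = 2 * sin b * cos b.
  by rewrite -{1}[t](_ : b + b = t) ?sinD /b; [ring | field].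
have sb : sin b != 0 by apply: contra hs => /eqP h; rewrite et h mulr0 mul0r.
have cb : cos b != 0 by apply: contra hs => /eqP h; rewrite et h mulr0.
apply: (mulIf hs); rewrite hornerD mulrDl !F_trig.
have -> : k.+1%:R * t = a + b by rewrite /a /b -mul2n -[(2*k)%N.+1]addn1 -[k.+1]addn1 !natrD; field.
have -> : k%:R * t = a - b by rewrite /a /b -mul2n -[(2*k)%N.+1]addn1 !natrD; field.
rewrite sinB sinD et; field.
by rewrite sb.
Qed.

Lemma Ue_odd k : is_Ue (k.*2.+1) (F k.+1 : {poly R}).
Proof.
move=> t hs; rewrite /Ue_trig /= odd_double /=.
apply: (mulIf hs); rewrite -[chebU_nat k]/(F k.+1) F_trig.
have -> : k.*2.+2%:R * t / 2 = k.+1%:R * t by rewrite -mul2n -[(2*k)%N.+2]addn2 -[k.+1]addn1 !natrD; field.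
by rewrite divfK.
Qed.
End Trig.

Theorem theoremB4 (R : realType) (n : nat) (hn : (1 <= n)%N) :
  exists Ue : {poly R}, is_Ue n Ue /\ phi n = Ue * Q n.
Proof.
have [k ek] : exists k, n = (k.*2 + odd n)%N by exists n./2; rewrite addnC odd_double_half.
case: (odd n) in ek; subst n.
  rewrite addn1; case: k => [|j] in hn *.
    by exists (F 1); split; [exact: (@Ue_odd R 0) | exact: phi_one].
  by exists (F j.+2); split; [exact: Ue_odd | exact: phi_odd].
rewrite addn0; case: k => [|j] in hn *; first by [].
by exists (F j.+2 + F j.+1); split; [exact: Ue_even | exact: phi_even].
Qed.
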